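(* Let $n\ge 5$ be even and let $x,y$ be adjacent vertices of $Q_n$ with $f_n(x)+f_n(y)=\operatorname{str}_{f_n}(Q_n)$. If $x$ and $y$ both begin with $11$, then $$\operatorname{str}_{f_n}(Q_n)\le \operatorname{str}_{f_{n-2}}(Q_{n-2})+3\cdot 2^{n-2}+\binom{n-3}{\lceil (n-3)/2\rceil}+\binom{n-2}{\lceil (n-2)/2\rceil}.$$
   Context: $Q_n$ is the $n$-dimensional hypercube: vertices are the $n$-bit strings, adjacent iff they differ in exactly one position. For a bijection $f:V(G)\to\{1,\dots,|V(G)|\}$, $\operatorname{str}_f(G)=\max\{f(u)+f(v):uv\in E(G)\}$. An $n$-bit string is $x_1\cdots x_n$, $x_i\in\{0,1\}$; its weight is its number of $1$s. Lexicographic order: $x<y$ if for some $k$, $x_j=y_j$ for $j<k$ and $x_k<y_k$. $S_n^i$ is the sequence of $n$-bit strings of weight $i$ in increasing lexicographic order; $R_n^i$ is the same set in decreasing lexicographic order. $S_n$ is the concatenation $(R_n^1,R_n^3,\dots,R_n^{n-1},S_n^n,S_n^{n-2},\dots,S_n^2,S_n^0)$ for even $n$ and $(R_n^1,R_n^3,\dots,R_n^{n-2},R_n^n,S_n^{n-1},\dots,S_n^2,S_n^0)$ for odd $n$; $f_n$ maps the string in position $j$ of $S_n$ to $j$. *)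

(* Defs.v *)
From mathcomp Require Import all_boot.
Set Implicit Arguments. Unset Strict Implicit. Unset Printing Implicit Defensive.

(* n-bit strings are lists of booleans of length n; false = 0, true = 1. *)

Fixpoint bitstrings (n : nat) : seq (seq bool) :=
  if n is m.+1 then [seq false :: s | s <- bitstrings m] ++ [seq true :: s | s <- bitstrings m]
  else [:: [::]].

Definition weight (s : seq bool) : nat := count id s.

Definition S_ni (n i : nat) : seq (seq bool) := [seq s <- bitstrings n | weight s == i].
Definition R_ni (n i : nat) : seq (seq bool) := rev (S_ni n i).

(* For even n this is (R^1,...,R^{n-1},S^n,...,S^0); for odd n it is
   (R^1,...,R^{n-2},R^n,S^{n-1},...,S^0). *)
Definition S_seq (n : nat) : seq (seq bool) :=
  flatten [seq R_ni n i | i <- iota 0 n.+1 & odd i] ++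
  flatten [seq S_ni n i | i <- rev (iota 0 n.+1) & ~~ odd i].

Definition f (n : nat) (x : seq bool) : nat := (index x (S_seq n)).+1.

Definition adj (x y : seq bool) : bool :=
  (size x == size y) && (count (fun p => p.1 != p.2) (zip x y) == 1).

Definition str (n : nat) : nat :=
  \max_(x <- bitstrings n) \max_(y <- bitstrings n | adj x y) (f n x + f n y).

(* Main.v *)
Require Import Defs.
From mathcomp Require Import all_boot zify.
Set Implicit Arguments. Unset Strict Implicit. Unset Printing Implicit Defensive.

Lemma cons_inj (b : bool) : injective (cons b).
Proof. by move=> ? ? []. Qed.

Lemma mem_bits n s : (s \in bitstrings n) = (size s == n).
Proof.
elim: n s => [|n IH] [|b s] /=.
- by rewrite inE.
- by rewrite inE.
- by rewrite mem_cat; apply/negP => /orP; case => /mapP [].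
rewrite mem_cat eqSS -IH; case: b.
  rewrite (mem_map (@cons_inj true)).
  by case: (s \in _); rewrite ?orbT // orbF; apply/negP => /mapP [].
rewrite (mem_map (@cons_inj false)).
by case: (s \in _) => //=; apply/negP => /mapP [].
Qed.

Lemma weight_cons b s : weight (b :: s) = b + weight s.
Proof. by []. Qed.

Lemma mem_S n i s : (s \in S_ni n i) = (size s == n) && (weight s == i).
Proof. by rewrite mem_filter mem_bits andbC. Qed.

Lemma mem_R n i s : (s \in R_ni n i) = (size s == n) && (weight s == i).
Proof. by rewrite mem_rev mem_S. Qed.

Lemma S_ni_SS n i :
  S_ni n.+1 i.+1 = map (cons false) (S_ni n i.+1) ++ map (cons true) (S_ni n i).
Proof.
rewrite /S_ni /= filter_cat !filter_map.
by congr (_ ++ _); congr map; apply: eq_filter => s /=; rewrite /weight /= ?add0n ?add1n ?eqSS.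
Qed.

Lemma S_ni_S0 n : S_ni n.+1 0 = map (cons false) (S_ni n 0).
Proof.
rewrite /S_ni /= filter_cat !filter_map.
have -> : [seq s <- bitstrings n | preim (cons true) (fun s0 : seq bool => weight s0 == 0) s] = [::].
  apply/eqP; rewrite -size_eq0 size_filter.
  by apply/eqP; rewrite (@eq_count _ _ pred0) ?count_pred0.
by rewrite cats0.
Qed.

Lemma size_S n i : size (S_ni n i) = 'C(n, i).
Proof.
elim: n i => [|n IH] [|i].
- by [].
- by [].
- by rewrite S_ni_S0 size_map IH !bin0.
by rewrite S_ni_SS size_cat !size_map !IH binS addnC.
Qed.

Lemma notin_map0 (y : seq bool) s : (true :: y \in map (cons false) s) = false.
Proof. by apply/negP => /mapP []. Qed.

Lemma index_map1 (y : seq bool) s : index (true :: y) (map (cons true) s) = index y s.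
Proof. by rewrite index_map //; apply: cons_inj. Qed.

Lemma idx_S m w x : size x = m -> weight x = w ->
  index [:: true, true & x] (S_ni m.+2 w.+2) =
  'C(m, w.+2) + 2 * 'C(m, w.+1) + index x (S_ni m w).
Proof.
move=> hs hw.
rewrite S_ni_SS index_cat notin_map0 size_map size_S index_map1.
rewrite S_ni_SS index_cat notin_map0 size_map size_S index_map1.
rewrite binS; lia.
Qed.

Lemma idx_R m w x : size x = m -> weight x = w ->
  index [:: true, true & x] (R_ni m.+2 w.+2) = index x (R_ni m w).
Proof.
move=> hs hw.
rewrite /R_ni S_ni_SS rev_cat -!map_rev index_cat.
rewrite (mem_map (@cons_inj true)) mem_rev mem_S /= hs hw !eqxx /= index_map1.
rewrite S_ni_SS rev_cat -!map_rev index_cat.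
by rewrite (mem_map (@cons_inj true)) mem_rev mem_S hs hw !eqxx /= index_map1.
Qed.

Definition Sp (b : bool) N k := \sum_(0 <= j < k | odd j == b) 'C(N, j).
Definition Pf N k := \sum_(0 <= j < k) 'C(N, j).

Lemma Sp0 b N : Sp b N 0 = 0.
Proof. by rewrite /Sp big_geq. Qed.

Lemma Sp_S b N k : Sp b N k.+1 = Sp b N k + (if odd k == b then 'C(N, k) else 0).
Proof. by rewrite /Sp big_mkcond big_nat_recr //= -big_mkcond. Qed.

Lemma Pf_S N k : Pf N k.+1 = Pf N k + 'C(N, k).
Proof. by rewrite /Pf big_nat_recr. Qed.

Lemma Sp_split N k : Sp false N k + Sp true N k = Pf N k.
Proof.
elim: k => [|k IH]; first by rewrite !Sp0 /Pf big_geq.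
rewrite !Sp_S Pf_S -IH; case: (odd k) => /=; lia.
Qed.

Lemma Pf_full N : Pf N N.+1 = 2 ^ N.
Proof.
rewrite /Pf big_mkord -(add1n 1) Pascal; apply: eq_bigr => i _ /=.
by rewrite !exp1n !muln1.
Qed.

Lemma Sp_triple b N k :
  Sp b N.+2 k.+2 = Sp b N k.+2 + 2 * Sp (~~ b) N k.+1 + Sp b N k.
Proof.
elim: k => [|k IH].
  rewrite !Sp_S !Sp0 /= !bin0 !bin1; case: b => /=; lia.
rewrite Sp_S IH !(Sp_S _ _ k.+2) !(Sp_S _ _ k.+1) !(Sp_S _ _ k).
rewrite !binS /=; clear IH; case: (odd k); case: b => /=; lia.
Qed.

Lemma Sp_alt p k :
  Sp false p.+1 k.+1 + (if odd k then 'C(p, k) else 0) =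
  Sp true p.+1 k.+1 + (if odd k then 0 else 'C(p, k)).
Proof.
elim: k => [|k IH].
  by rewrite !Sp_S !Sp0 /= !bin0.
rewrite !(Sp_S _ _ k.+1) !binS /=; move: IH; case: (odd k) => /=; lia.
Qed.

Lemma bin_step n k : k.*2 < n -> 'C(n, k) <= 'C(n, k.+1).
Proof.
move=> h; have := mul_bin_left n k.
have: k.+1 <= n - k by lia.
move=> h2 e; have : k.+1 * 'C(n, k) <= k.+1 * 'C(n, k.+1).
  by rewrite e leq_mul2r h2 orbT.
by rewrite leq_mul2l.
Qed.



Lemma bin_up n k d : k + d = n.+1./2 -> 'C(n, k) <= 'C(n, n.+1./2).
Proof.
elim: d k => [|d IH] k h; first by rewrite -h addn0.
apply: leq_trans (bin_step _) (IH k.+1 _); last by rewrite -h; lia.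
have h1 : (n.+1./2).*2 <= n.+1 by rewrite -{2}(odd_double_half n.+1); lia.
lia.
Qed.

Lemma bin_central n k : 'C(n, k) <= 'C(n, n.+1./2).
Proof.
have h1 : (n.+1./2).*2 <= n.+1 by rewrite -{2}(odd_double_half n.+1); lia.
have h2 : n.+1 <= (n.+1./2).*2.+1 by rewrite -{1}(odd_double_half n.+1); case: odd => /=; lia.
case: (leqP k n.+1./2) => hk.
  by apply: (@bin_up n k (n.+1./2 - k)); lia.
case: (leqP k n) => hkn; last by rewrite bin_small.
rewrite -bin_sub //; apply: (@bin_up n (n - k) (n.+1./2 - (n - k))); lia.
Qed.

Lemma index_blocks (T : eqType) (B : nat -> seq T) s1 i s2 (x : T) :
  x \in B i -> all (fun j => x \notin B j) s1 ->
  index x (flatten [seq B j | j <- s1 ++ i :: s2]) =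
  sumn [seq size (B j) | j <- s1] + index x (B i).
Proof.
move=> hi; elim: s1 => [|j s1 IH] /=; first by rewrite index_cat hi.
by case/andP=> hj /IH{}IH; rewrite index_cat (negbTE hj) IH addnA.
Qed.

Lemma SpT N k : Sp true N k = \sum_(j <- iota 0 k | odd j) 'C(N, j).
Proof. by rewrite /Sp /index_iota subn0; apply: eq_bigl => j; case: odd. Qed.

Lemma SpF N k : Sp false N k = \sum_(j <- iota 0 k | ~~ odd j) 'C(N, j).
Proof. by rewrite /Sp /index_iota subn0; apply: eq_bigl => j; case: odd. Qed.

Lemma sumn_blocks (B : nat -> seq (seq bool)) N (P : pred nat) s :
  (forall j, size (B j) = 'C(N, j)) ->
  sumn [seq size (B j) | j <- [seq j <- s | P j]] = \sum_(j <- s | P j) 'C(N, j).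
Proof.
by move=> hB; rewrite sumnE big_map big_filter; apply: eq_bigr => j _; rewrite hB.
Qed.

Lemma size_R N j : size (R_ni N j) = 'C(N, j).
Proof. by rewrite size_rev size_S. Qed.

Lemma iota_split N i : i <= N -> iota 0 N.+1 = iota 0 i ++ i :: iota i.+1 (N - i).
Proof.
by move=> h; rewrite (_ : N.+1 = i + (N - i).+1) ?iotaD //; lia.
Qed.

Lemma f_odd N x : size x = N -> odd (weight x) ->
  f N x = (Sp true N (weight x) + index x (R_ni N (weight x))).+1.
Proof.
move=> hs ho; set i := weight x.
have hle : i <= N by rewrite -hs /i /weight count_size.
have hx : x \in R_ni N i by rewrite mem_R hs !eqxx.
rewrite /f /S_seq index_cat.
have -> : x \in flatten [seq R_ni N j | j <- iota 0 N.+1 & odd j].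
  apply/flatten_mapP; exists i => //; rewrite mem_filter ho mem_iota /=; lia.
rewrite (iota_split hle) filter_cat /= ho index_blocks //.
  by rewrite (sumn_blocks _ _ (size_R N)) SpT.
apply/allP => j; rewrite mem_filter mem_iota mem_R => /andP [_ hj].
rewrite /i in hj *; apply/negP => /andP [_ /eqP e]; lia.
Qed.

Lemma f_even N x : size x = N -> ~~ odd (weight x) ->
  f N x + Sp false N (weight x).+1 = (2 ^ N + index x (S_ni N (weight x))).+1.
Proof.
move=> hs ho; set i := weight x.
have hle : i <= N by rewrite -hs /i /weight count_size.
have hx : x \in S_ni N i by rewrite mem_S hs !eqxx.
rewrite /f /S_seq index_cat.
have -> : x \in flatten [seq R_ni N j | j <- iota 0 N.+1 & odd j] = false.
  apply/negP => /flatten_mapP [j]; rewrite mem_filter mem_R => /andP [hj _] /andP [_ /eqP e].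
  by rewrite /i e hj in ho.
rewrite size_flatten /shape -map_comp (sumn_blocks _ _ (size_R N)) -SpT.
rewrite (iota_split hle) rev_cat /= rev_cons cat_rcons filter_cat /= ho.
rewrite index_blocks //; last first.
  apply/allP => j; rewrite mem_filter mem_rev mem_iota mem_S => /andP [_ hj].
  rewrite /i in hj *; apply/negP => /andP [_ /eqP e]; lia.
rewrite (sumn_blocks _ _ (size_S N)) big_rev -Pf_full -Sp_split.
have -> : Sp false N N.+1 = Sp false N i.+1 + \sum_(j <- iota i.+1 (N - i) | ~~ odd j) 'C(N, j).
  have h1 : i.+1 <= N.+1 by lia.
  rewrite /Sp (@big_cat_nat _ _ _ i.+1) //=.
  congr (_ + _); rewrite /index_iota subSS; apply: eq_bigl => j; by case: odd.
move: (\sum_(j <- iota i.+1 (N - i) | ~~ odd j) 'C(N, j)) => S; lia.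
Qed.

Lemma adj_same (a : bool) x y : adj (a :: x) (a :: y) = adj x y.
Proof. by rewrite /adj /= eqSS eqxx add0n. Qed.

Lemma eq_of_count0 (x y : seq bool) : size x = size y ->
  count (fun p => p.1 != p.2) (zip x y) = 0 -> x = y.
Proof.
elim: x y => [|a x IH] [|b y] //= [hs].
by case: (boolP (a != b)) => //= /negPn/eqP -> /(IH _ hs) ->.
Qed.

Lemma adj_weight x y : adj x y ->
  weight y = (weight x).+1 \/ weight x = (weight y).+1.
Proof.
elim: x y => [|a x IH] [|b y] /=.
- by rewrite /adj.
- by rewrite /adj.
- by rewrite /adj.
rewrite /adj /= eqSS => /andP [/eqP h1 /eqP h2].
have hadj : count (fun p => p.1 != p.2) (zip x y) = 1 -> weight y = (weight x).+1 \/ weight x = (weight y).+1.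
  by move=> h; apply: IH; rewrite /adj h1 eqxx h.
move: h2; case: a; case: b => /= h2.
- by move: (hadj h2); lia.
- have h3 := eq_of_count0 h1.
  by rewrite h3; [lia | move: h2; rewrite add1n => [[]]].
- have h3 := eq_of_count0 h1.
  by rewrite h3; [lia | move: h2; rewrite add1n => [[]]].
- by move: (hadj h2); lia.
Qed.

Lemma str_ge m x y : size x = m -> size y = m -> adj x y -> f m x + f m y <= str m.
Proof.
move=> hx hy hxy; rewrite /str.
have hxm : x \in bitstrings m by rewrite mem_bits hx.
have hym : y \in bitstrings m by rewrite mem_bits hy.
apply: leq_trans (@leq_bigmax_seq _ _ (adj x) (fun y => f m x + f m y) y hym hxy) _.
exact: (@leq_bigmax_seq _ _ xpredT (fun x => \max_(y <- bitstrings m | adj x y) (f m x + f m y)) x hxm (erefl true)).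
Qed.

Lemma core p x y : let m := p.+1 in
  size x = m -> size y = m -> adj x y -> ~~ odd (weight x) ->
  f m.+2 [:: true, true & x] + f m.+2 [:: true, true & y] <=
  f m x + f m y + 3 * 2 ^ m + 'C(p, p.+1./2) + 'C(m, m.+1./2).
Proof.
move=> m hx hy hxy hwx.
set w := weight x in hwx *; set v := weight y.
have hwy := adj_weight hxy; rewrite -/w -/v in hwy.
have hw : odd w = false by apply/negbTE.
have hv : odd v.
  by case: hwy => h; [rewrite h /= hw | move: hw; rewrite h /=; case: (odd v)].
have hw2 : weight [:: true, true & x] = w.+2 by rewrite /weight /= !add1n.
have hv2 : weight [:: true, true & y] = v.+2 by rewrite /weight /= !add1n.
have hxs : size [:: true, true & x] = m.+2 by rewrite /= hx.
have hxp : ~~ odd (weight [:: true, true & x]) by rewrite hw2 /= hw.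
have e1 := f_even hxs hxp.
rewrite hw2 idx_S // in e1.
have e2 := f_even hx hwx.
have hys : size [:: true, true & y] = m.+2 by rewrite /= hy.
have hyp : odd (weight [:: true, true & y]) by rewrite hv2 /= hv.
have e3 := f_odd hys hyp.
rewrite hv2 idx_R // in e3.
have e4 := f_odd hy hv.
have t1 := Sp_triple false m w.+1.
have t2 := Sp_triple true m v.
have s1 := Sp_S false m w.+2.
have s2 := Sp_S false m w.+1.
have s3 := Sp_S true m w.+1.
have s4 := Sp_S true m v.+1.
have s5 := Sp_S true m v.
have s6 := Sp_S false m v.
have s7 := Sp_S false m v.+1.
have alt := Sp_alt p w.
rewrite /= ?hw ?hv /= in s1 s2 s3 s4 s5 s6 s7 alt.
rewrite /= in t1 t2. rewrite -/m in alt.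
have b1 := bin_central p w.
have b2 := bin_central m w.+1.
have ex : 2 ^ m.+2 = 4 * 2 ^ m by rewrite !expnS; lia.
rewrite ex in e1.
rewrite -/w -/v in e2 e4.
case: hwy => h.
  rewrite h in e3 e4 t2 s4 s5 s6 s7.
  lia.
rewrite h in e1 e2 t1 s1 s2 s3 alt b1 b2.
lia.
Qed.

Lemma count_zip_sym (x y : seq bool) :
  count (fun p => p.1 != p.2) (zip x y) = count (fun p => p.1 != p.2) (zip y x).
Proof. by elim: x y => [|a x IH] [|b y] //=; rewrite IH eq_sym. Qed.

Lemma adj_sym x y : adj x y = adj y x.
Proof. by rewrite /adj eq_sym count_zip_sym. Qed.

Theorem theorem2p6 (n : nat) (x y : seq bool) :
  5 <= n -> ~~ odd n ->
  size x = n -> size y = n -> adj x y ->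
  f n x + f n y = str n ->
  take 2 x = [:: true; true] -> take 2 y = [:: true; true] ->
  str n <= str (n - 2) + 3 * 2 ^ (n - 2)
           + 'C(n - 3, (n - 3).+1./2) + 'C(n - 2, (n - 2).+1./2).
Proof.
move=> h5 hev hx hy hxy E tx ty.
have [p hp] : exists p, n = p.+3 by exists (n - 3); lia.
rewrite {}hp in hx hy E h5 hev *.
have -> : p.+3 - 2 = p.+1 by lia.
have -> : p.+3 - 3 = p by lia.
case: x hx hxy E tx => [|a [|b x]] // hx hxy E tx.
case: y hy hxy E ty => [|c [|d y]] // hy hxy E ty.
move: tx ty => /= [ha hb _] [hc hd _]; subst a b c d.
move: hx hy => /= [hx] [hy].
rewrite !adj_same in hxy.
rewrite -E.
have hs := str_ge hx hy hxy.
rewrite uphalfE (_ : p./2.+1 = p.+2./2) //.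
case: (boolP (odd (weight x))) => hox.
  have hoy : ~~ odd (weight y).
    by case: (adj_weight hxy) => h; move: hox; rewrite h /=; case: odd.
  rewrite adj_sym in hxy.
  have := core hy hx hxy hoy; lia.
have := core hx hy hxy hox; lia.
Qed.
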